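(* Let $t$ be a positive integer and let $G_t$ be the labeling of the complete graph $K_{2t}$ in which the edges of a fixed perfect matching ($t$ pairwise disjoint edges) are labeled $-$ and all other edges are labeled $+$. If $\mathcal{C}$ is a clustering (partition of the vertex set) of $G_t$ with more than one cluster, then some vertex of $G_t$ has at least $t-1$ errors in $\mathcal{C}$.
   Context: An error at a vertex $v$ in a clustering is an edge incident to $v$ that is either a $+$ edge whose endpoints lie in different clusters or a $-$ edge whose endpoints lie in the same cluster. *)

(* Defs.v *)
From mathcomp Require Import all_boot.
Set Implicit Arguments. Unset Strict Implicit. Unset Printing Implicit Defensive.

(* A perfect matching on the vertex set T is encoded by a fixed-point-free
   involution m : T -> T; its edges are the pairs {x, m x}. *)
Definition perfect_matching (T : finType) (m : T -> T) : Prop :=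
  (forall x, m (m x) = x) /\ (forall x, m x != x).

Definition minus_edge (T : finType) (m : T -> T) (u v : T) : bool :=
  (u != v) && (v == m u).
Definition plus_edge (T : finType) (m : T -> T) (u v : T) : bool :=
  (u != v) && (v != m u).

Definition errors (T : finType) (m : T -> T) (P : {set {set T}}) (v : T) : nat :=
  #|[set u | (plus_edge m v u && (pblock P u != pblock P v))
           || (minus_edge m v u && (pblock P u == pblock P v))]|.

(* Main.v *)
Require Import Defs.
From mathcomp Require Import all_boot.
From mathcomp Require Import zify.

Lemma key (T : finType) (m : T -> T) (P : {set {set T}}) (A : {set T}) (v : T) :
  partition P [set: T] -> A \in P -> v \in A ->
  #|T| - #|A| - 1 <= errors m P v.
Proof.
move=> /and3P[/eqP cP tP _] AP vA.
have pv : pblock P v = A by apply: def_pblock.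
have sub : (~: A) :\ m v \subset [set u | (plus_edge m v u && (pblock P u != pblock P v))
           || (minus_edge m v u && (pblock P u == pblock P v))].
  apply/subsetP => u; rewrite !inE => /andP[um uA]; apply/orP; left.
  rewrite /plus_edge um pv andbT; apply/andP; split.
    by apply/eqP => vu; rewrite -vu vA in uA.
  apply/eqP => pu.
  have : u \in pblock P u by rewrite mem_pblock cP inE.
  by rewrite pu (negbTE uA).
have := subset_leq_card sub; rewrite /errors.
have := cardsD1 (m v) (~: A); have := cardsC A.
case: (m v \in ~: A) => /=; lia.
Qed.

Theorem lemma1 (t : nat) (T : finType) (m : T -> T) (P : {set {set T}}) :
  0 < t -> #|T| = 2 * t -> perfect_matching m ->
  partition P [set: T] -> 1 < #|P| ->
  exists v : T, t.-1 <= errors m P v.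
Proof.
move=> t0 cT _ Pp /card_gt1P[A [B [AP BP AB]]].
have Pp' := Pp; move: Pp' => /and3P[_ tP n0].
have dAB : [disjoint A & B] by move/trivIsetP: tP; apply.
have := leq_card_setU A B; rewrite dAB => -[_ /eqP e].
have := max_card (A :|: B); rewrite e cT => le.
have [a aA] : exists a, a \in A.
  by apply/set0Pn; apply: contraNneq n0 => <-.
have [b bB] : exists b, b \in B.
  by apply/set0Pn; apply: contraNneq n0 => <-.
case: (leqP #|A| t) => h.
  exists a; have := @key _ m _ _ _ Pp AP aA; lia.
exists b; have := @key _ m _ _ _ Pp BP bB; lia.
Qed.
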